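(* Let $C$ be a field of characteristic zero, $L=\sum_{k=0}^{r_L}l_k(x)\partial^k\in C[x][\partial]$ of order $r_L$ with $\deg l_k\le d_L$, and $P\in C[x,y]$ with $\deg_yP=r_P$, $\deg_xP=d_P$, square-free in $C(x)[y]$ and without non-constant divisors in $\bar C[y]$. Let $f$ be a solution of $L$ and $g$ be a solution of $P$, and let $U(x,y)=P_y(x,y)^2\,l_{r_L}(y)$. For every $\ell\in\mathbb N$ there exist polynomials $E_{\ell,j}\in C[x,y]$, $0\le j<r_L$, with $\deg_xE_{\ell,j}\le\ell(2d_P-1)$ and $\deg_yE_{\ell,j}\le\ell(2r_P+d_L-1)$ for all $0\le j<r_L$, such that \[ \partial^\ell(f\circ g)=\frac1{U(x,g)^\ell}\sum_{j=0}^{r_L-1}E_{\ell,j}(x,g)\,(f^{(j)}\circ g). \]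
   Context: $P_y$ denotes the partial derivative of $P$ with respect to $y$. A solution $g$ of $P$ satisfies $P(x,g(x))=0$; a solution $f$ of $L$ satisfies $L(f)=0$. Compositions are understood in the power series sense: for $\alpha\in C$, $g\in C[[x-\alpha]]$ and $f\in C[[x-g(\alpha)]]$, $f\circ g\in C[[x-\alpha]]$ (for $C=\mathbb C$, composition of analytic functions); $\partial$ acts as $d/dx$. *)

(* Defs.v *)
From HB Require Import structures.
From mathcomp Require Import all_boot all_order all_algebra.
From mathcomp Require Import fraction.
Set Implicit Arguments. Unset Strict Implicit. Unset Printing Implicit Defensive.
Import Order.TTheory GRing.Theory Num.Theory.
Local Open Scope ring_scope.

(* Bivariate polynomials Q in C[x,y] are represented as {poly {poly C}}:
   the OUTER variable is y, the coefficients Q`_i are polynomials in x. *)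

Section Defs.
Variable C : fieldType.

(* Formal power series in t = x - a (the expansion point a is kept apart). *)
Definition fps := nat -> C.

Definition fps_mul (a b : fps) : fps :=
  fun n => \sum_(i < n.+1) a i * b (n - i)%N.
Definition fps_one : fps := fun n => (n == 0%N)%:R.
Definition fps_pow (a : fps) (k : nat) : fps := iter k (fps_mul a) fps_one.
Definition fps_deriv (a : fps) : fps := fun n => a n.+1 *+ n.+1.

Definition poly_at (p : {poly C}) (a : C) : fps :=
  fun n => (p \Po ('X + a%:P))`_n.

Definition bivar_eval (Q : {poly {poly C}}) (a : C) (g : fps) : fps :=
  fun n => \sum_(i < size Q) fps_mul (poly_at Q`_i a) (fps_pow g i) n.

(* composition f o g, where g is a series in x - a and f a series in
   x - g(a) (g(a) = g 0):  (f o g) = sum_n f_n (g - g(a))^n *)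
Definition fps_comp (f g : fps) : fps :=
  fun k => \sum_(n < k.+1)
     f n * fps_pow (fun m => if m == 0%N then 0 else g m) n k.

Definition solves_L (rL : nat) (l : nat -> {poly C}) (b : C) (f : fps) : Prop :=
  forall n, \sum_(k < rL.+1) fps_mul (poly_at (l k) b) (iter k fps_deriv f) n = 0.

Definition solves_P (P : {poly {poly C}}) (a : C) (g : fps) : Prop :=
  forall n, bivar_eval P a g n = 0.

Definition degx (Q : {poly {poly C}}) : nat := (\max_(i < size Q) (size (nth 0%R Q i)).-1)%N.

Definition toCxy (P : {poly {poly C}}) : {poly {fraction {poly C}}} :=
  map_poly (@FracField.tofrac {poly C}) P.

Definition squarefree (F : fieldType) (p : {poly F}) : Prop :=
  forall q : {poly F}, q ^+ 2 %| p -> (size q <= 1)%N.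

(* P has no non-constant divisor in Cbar[y]: stated for every algebraically
   closed extension K of C (embedding iota). *)
Definition no_nonconst_y_divisor (P : {poly {poly C}}) : Prop :=
  forall (K : closedFieldType) (iota : {rmorphism C -> K})
         (q : {poly K}) (h : {poly {poly K}}),
    map_poly (map_poly iota) P = map_poly polyC q * h -> (size q <= 1)%N.

End Defs.

(* Main.v *)
Require Import Defs.
From HB Require Import structures.
From mathcomp Require Import all_boot all_order all_algebra.
From mathcomp Require Import fraction.
Import Order.TTheory GRing.Theory Num.Theory.
Local Open Scope ring_scope.
From mathcomp Require Import ring zify.

Set Implicit Arguments. Unset Strict Implicit.

Definition small (C : fieldType) (K : nat) (p : {poly C}) :=
  forall i, (i < K)%N -> p`_i = 0.
Definition rep (C : fieldType) (K : nat) (a : fps C) (p : {poly C}) :=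
  forall i, (i < K)%N -> a i = p`_i.
Definition T (C : fieldType) (a : fps C) (M : nat) : {poly C} := \poly_(i < M) a i.

Lemma small_le (C : fieldType) K K' (p : {poly C}) : (K' <= K)%N -> small K p -> small K' p.
Proof. move=> h s i hi; apply: s; lia. Qed.
Lemma small0 (C : fieldType) K : small K (0 : {poly C}).
Proof. by move=> i _; rewrite coef0. Qed.
Lemma smallD (C : fieldType) K (p q : {poly C}) : small K p -> small K q -> small K (p + q).
Proof. by move=> a b i hi; rewrite coefD a // b // addr0. Qed.
Lemma smallN (C : fieldType) K (p : {poly C}) : small K p -> small K (- p).
Proof. by move=> a i hi; rewrite coefN a // oppr0. Qed.
Lemma smallB (C : fieldType) K (p q : {poly C}) : small K p -> small K q -> small K (p - q).
Proof. by move=> a b; apply: smallD => //; apply: smallN. Qed.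
Lemma small_mull (C : fieldType) K (p q : {poly C}) : small K p -> small K (q * p).
Proof.
move=> a i hi; rewrite coefM big1 // => j _; rewrite a ?mulr0 //.
have := ltn_ord j; lia.
Qed.
Lemma small_mulr (C : fieldType) K (p q : {poly C}) : small K p -> small K (p * q).
Proof. by move=> a; rewrite mulrC; apply: small_mull. Qed.
Lemma small_muln (C : fieldType) K (p : {poly C}) n : small K p -> small K (p *+ n).
Proof. by move=> a i hi; rewrite coefMn a // mul0rn. Qed.
Lemma small_sum (C : fieldType) K (I : Type) (r : seq I) (F : I -> {poly C}) :
  (forall i, small K (F i)) -> small K (\sum_(i <- r) F i).
Proof.
move=> h; elim: r => [|x r IH]; first by rewrite big_nil; apply: small0.
by rewrite big_cons; apply: smallD.
Qed.
Lemma small_deriv (C : fieldType) K (p : {poly C}) : small K p -> small K.-1 p^`().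
Proof. move=> a i hi; rewrite coef_deriv a ?mul0rn //; lia. Qed.
Lemma small_eq (C : fieldType) K (p q : {poly C}) : p = q -> small K (p - q).
Proof. by move=> ->; rewrite subrr; apply: small0. Qed.

Lemma coef_pow0 (C : fieldType) (H : {poly C}) i k :
  H`_0 = 0 -> (k < i)%N -> (H ^+ i)`_k = 0.
Proof.
move=> h0; elim: i k => [|i IH] k hk //.
rewrite exprS coefM big1 // => j _.
case: (nat_of_ord j) (ltn_ord j) => [|j'] hj; first by rewrite h0 mul0r.
rewrite IH ?mulr0 //; lia.
Qed.

Lemma small_comp (C : fieldType) K (p H : {poly C}) :
  small K p -> H`_0 = 0 -> small K (p \Po H).
Proof.
move=> a h0 k hk; rewrite coef_comp_poly big1 // => i _.
case: (ltnP i K) => hi; first by rewrite a // mul0r.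
rewrite coef_pow0 ?mulr0 //; lia.
Qed.

Lemma rep_le (C : fieldType) K K' (a : fps C) p : (K' <= K)%N -> rep K a p -> rep K' a p.
Proof. move=> h s i hi; apply: s; lia. Qed.
Lemma rep_T (C : fieldType) K (a : fps C) : rep K a (T a K).
Proof. by move=> i hi; rewrite coef_poly hi. Qed.
Lemma rep_small (C : fieldType) K (a : fps C) p q : rep K a p -> rep K a q -> small K (p - q).
Proof. by move=> h1 h2 i hi; rewrite coefB -h1 // -h2 // subrr. Qed.
Lemma rep_trans (C : fieldType) K (a : fps C) p q : rep K a p -> small K (q - p) -> rep K a q.
Proof. move=> h1 h2 i hi; rewrite h1 //; apply/eqP; rewrite eq_sym -subr_eq0 -coefB; apply/eqP; exact: h2. Qed.
Lemma rep_mul (C : fieldType) K (a b : fps C) p q :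
  rep K a p -> rep K b q -> rep K (fps_mul a b) (p * q).
Proof.
move=> ha hb i hi; rewrite /fps_mul coefM; apply: eq_bigr => j _.
have := ltn_ord j => hj.
rewrite ha ?hb //; lia.
Qed.
Lemma rep_one (C : fieldType) K : rep K (@fps_one C) 1.
Proof. by move=> i _; rewrite coef1. Qed.
Lemma rep_pow (C : fieldType) K (a : fps C) p k : rep K a p -> rep K (fps_pow a k) (p ^+ k).
Proof.
move=> h; elim: k => [|k IH]; first exact: rep_one.
by rewrite exprS /fps_pow iterS; apply: rep_mul.
Qed.
Lemma rep_deriv (C : fieldType) K (a : fps C) p : rep K a p -> rep K.-1 (fps_deriv a) p^`().
Proof. move=> h i hi; rewrite coef_deriv /fps_deriv h //; lia. Qed.
Lemma rep_iter (C : fieldType) K (a : fps C) p j :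
  rep K a p -> rep (K - j) (iter j (@fps_deriv C) a) p^`(j).
Proof.
move=> h; elim: j => [|j IH]; first by rewrite subn0 derivn0.
rewrite iterS derivnS; apply: rep_le (rep_deriv IH); lia.
Qed.

Definition shf (C : fieldType) (a : C) (p : {poly C}) : {poly C} := p \Po ('X + a%:P).
Fact shf_mul (C : fieldType) (a : C) : GRing.multiplicative (shf a).
Proof. split. move=> x y; exact: comp_polyM. exact: comp_polyC. Qed.
HB.instance Definition _ (C : fieldType) (a : C) :=
  GRing.Additive.copy (shf a) (comp_poly ('X + a%:P)).
HB.instance Definition _ (C : fieldType) (a : C) :=
  GRing.isMultiplicative.Build _ _ (shf a) (shf_mul a).

Definition ev (C : fieldType) (a : C) (Q : {poly {poly C}}) (G : {poly C}) : {poly C} :=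
  (map_poly (shf a) Q).[G].

Lemma size_map_le (R S : nzRingType) (f : R -> S) (p : {poly R}) :
  (size (map_poly f p) <= size p)%N.
Proof. by rewrite /map_poly size_poly. Qed.

Lemma rep_bivar (C : fieldType) K (Q : {poly {poly C}}) a (g : fps C) G :
  rep K g G -> rep K (bivar_eval Q a g) (ev a Q G).
Proof.
move=> hg i hi.
rewrite /ev (horner_coef_wide _ (size_map_le _ _)) coef_sum /bivar_eval.
apply: eq_bigr => j _; rewrite coef_map.
have h1 : rep K (poly_at Q`_j a) (shf a Q`_j) by move=> k _.
exact: (rep_mul h1 (rep_pow j hg)).
Qed.

Lemma coef_comp_wide (C : fieldType) n (p q : {poly C}) k :
  (size p <= n)%N -> (p \Po q)`_k = \sum_(i < n) p`_i * (q ^+ i)`_k.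
Proof.
move=> hs; rewrite /comp_poly (horner_coef_wide _ (leq_trans (size_map_le _ _) hs)).
by rewrite coef_sum; apply: eq_bigr => i _; rewrite coef_map /= coefCM.
Qed.

Lemma rep_comp (C : fieldType) K (f g : fps C) F G :
  rep K f F -> rep K g G -> rep K (fps_comp f g) (F \Po (G - (g 0%N)%:P)).
Proof.
move=> hf hg.
case: K hf hg => [|K] hf hg; first by move=> i.
set H := G - _.
have H0 : H`_0 = 0 by rewrite /H coefB coefC /= -hg // subrr.
apply: (@rep_trans _ _ _ (T f K.+1 \Po H)).
  move=> k hk.
  rewrite /fps_comp (coef_comp_wide _ _ (size_poly _ _)).
  rewrite (big_ord_widen K.+1 (fun n => f n * fps_pow (fun m => if m == 0%N then 0 else g m) n k) hk).
  rewrite big_mkcond; apply: eq_bigr => i _ /=.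
  rewrite coef_poly ltn_ord.
  have hr : rep K.+1 (fun m => if m == 0%N then 0 else g m) H.
    move=> m hm; case: eqP => [->|/eqP hm0]; first by rewrite H0.
    by rewrite /H coefB coefC (negbTE hm0) subr0 hg.
  case: ifP => hik; first by rewrite (rep_pow i hr).
  by rewrite coef_pow0 ?mulr0 //; lia.
rewrite -comp_polyB; apply: small_comp => //.
move=> i hi; rewrite coefB coef_poly hi hf // subrr //.
Qed.

Lemma alg_id (R : comRingType) (r ell : nat) (e dxe de l F : nat -> R)
  (py px dlr dpy dxpy g' : R) :
  let lr := l r.+1 in
  let u := py ^+ 2 * lr in
  let du := (py * (dxpy + dpy * g') * lr) *+ 2 + py ^+ 2 * (dlr * g') in
  let v := (lr * (dxpy * py - dpy * px)) *+ 2 - py * px * dlr in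
  let ep := px + py * g' in
  let Y := \sum_(j < r.+1) e j * F j in
  let Y' := \sum_(j < r.+1) ((dxe j + de j * g') * F j + e j * (F j.+1 * g')) in
  let E' := fun j : nat => py * lr * (py * dxe j - px * de j)
      - (j != 0%N)%:R * (py * px * lr * e j.-1)
      + py * px * e r * l j - v *+ ell * e j in
  u * Y' - du * Y *+ ell - \sum_(j < r.+1) E' j * F j =
  ep * (py * lr * \sum_(j < r.+1) de j * F j + py * lr * \sum_(j < r.+1) e j * F j.+1
        - ((dpy * lr) *+ 2 + py * dlr) * Y *+ ell)
  - py * px * e r * (\sum_(j < r.+2) l j * F j).
Proof.
move=> lr u du v ep Y Y' E'.
have hA : \sum_(j < r.+1) (nat_of_ord j != 0%N)%:R * (py * px * lr * e j.-1) * F j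
    = py * px * lr * \sum_(j < r) e j * F j.+1.
  by rewrite big_ord_recl /= mul0r mul0r add0r mulr_sumr; apply: eq_bigr => j _; rewrite /= mul1r mulrA.
have hB : \sum_(j < r.+1) e j * F j.+1 = \sum_(j < r) e j * F j.+1 + e r * F r.+1.
  by rewrite big_ord_recr.
have hL : \sum_(j < r.+2) l j * F j = \sum_(j < r.+1) l j * F j + lr * F r.+1.
  by rewrite big_ord_recr.
have hE : \sum_(j < r.+1) E' j * F j =
   py * lr * py * (\sum_(j < r.+1) dxe j * F j) - py * lr * px * (\sum_(j < r.+1) de j * F j)
   - \sum_(j < r.+1) (nat_of_ord j != 0%N)%:R * (py * px * lr * e j.-1) * F j
   + py * px * e r * (\sum_(j < r.+1) l j * F j) - v *+ ell * Y.
  rewrite /Y !mulr_sumr -!sumrB -!big_split /= -!sumrB; apply: eq_bigr => j _.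
  rewrite /E'; ring.
have hY' : Y' = \sum_(j < r.+1) dxe j * F j + g' * \sum_(j < r.+1) de j * F j
    + g' * \sum_(j < r.+1) e j * F j.+1.
  rewrite /Y' !mulr_sumr -!big_split /=; apply: eq_bigr => j _; ring.
rewrite hE hY' hA hL hB /u /du /v /ep /Y.
ring.
Qed.


Lemma evM (C : fieldType) (a : C) Q1 Q2 G : ev a (Q1 * Q2) G = ev a Q1 G * ev a Q2 G.
Proof. by rewrite /ev rmorphM hornerM. Qed.
Lemma evD (C : fieldType) (a : C) Q1 Q2 G : ev a (Q1 + Q2) G = ev a Q1 G + ev a Q2 G.
Proof. by rewrite /ev rmorphD hornerD. Qed.
Lemma evB (C : fieldType) (a : C) Q1 Q2 G : ev a (Q1 - Q2) G = ev a Q1 G - ev a Q2 G.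
Proof. by rewrite /ev rmorphB hornerD hornerN. Qed.
Lemma evMn (C : fieldType) (a : C) Q n G : ev a (Q *+ n) G = ev a Q G *+ n.
Proof. by rewrite /ev rmorphMn hornerMn. Qed.
Lemma ev_nat (C : fieldType) (a : C) n G : ev a n%:R G = n%:R.
Proof. by rewrite /ev rmorph_nat -polyC_natr hornerC. Qed.
Lemma ev_polyC (C : fieldType) (a : C) (p : {poly C}) G : ev a p^:P G = p \Po G.
Proof.
rewrite /ev -map_poly_comp /comp_poly; congr (_.[G]); apply: eq_map_poly => c /=.
by rewrite /shf comp_polyC.
Qed.

Definition dxq (C : fieldType) (Q : {poly {poly C}}) : {poly {poly C}} := map_poly (@deriv C) Q.

Lemma deriv_horner (C : fieldType) (Q : {poly {poly C}}) (G : {poly C}) :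
  (Q.[G])^`() = (dxq Q).[G] + (Q^`()).[G] * G^`().
Proof.
elim/poly_ind: Q => [|Q c IH]; first by rewrite /dxq map_poly0 deriv0 !horner0 mul0r addr0 deriv0.
have -> : dxq (Q * 'X + c%:P) = dxq Q * 'X + (c^`())%:P.
  apply/polyP => i; rewrite /dxq coef_map /= !coefD coefMX coefC coefMX coefC coef_map /=.
  by case: i => [|i] /=; rewrite ?add0r ?addr0 ?derivD ?deriv0.
rewrite derivMXaddC !hornerMXaddC hornerD hornerMX derivD derivM IH.
ring.
Qed.

Lemma shf_deriv (C : fieldType) (a : C) p : (shf a p)^`() = shf a p^`().
Proof. by rewrite /shf deriv_comp derivD derivX derivC addr0 mulr1. Qed.

Lemma ev_deriv (C : fieldType) (a : C) Q G :
  (ev a Q G)^`() = ev a (dxq Q) G + ev a Q^`() G * G^`().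
Proof.
rewrite /ev deriv_horner deriv_map; congr (_.[G] + _).
rewrite /dxq -!map_poly_comp; apply: eq_map_poly => p /=; exact: shf_deriv.
Qed.

Lemma derivC_map (C : fieldType) (p : {poly C}) : (p^:P)^`() = (p^`())^:P.
Proof. by rewrite deriv_map. Qed.

Definition Vq (C : fieldType) (P : {poly {poly C}}) (l : nat -> {poly C}) (rL : nat)
  : {poly {poly C}} :=
  ((l rL)^:P * (dxq P^`() * P^`() - P^`()^`() * dxq P)) *+ 2
  - P^`() * dxq P * ((l rL)^:P)^`().

Fixpoint Ef (C : fieldType) (P : {poly {poly C}}) (l : nat -> {poly C}) (rL : nat)
   (ell : nat) (j : nat) {struct ell} : {poly {poly C}} :=
  match ell with
  | 0%N => (j == 0%N)%:R
  | e.+1 => P^`() * (l rL)^:P * (P^`() * dxq (Ef P l rL e j) - dxq P * (Ef P l rL e j)^`())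
      - (j != 0%N)%:R * (P^`() * dxq P * (l rL)^:P * Ef P l rL e j.-1)
      + P^`() * dxq P * Ef P l rL e rL.-1 * (l j)^:P - Vq P l rL *+ e * Ef P l rL e j
  end.

Lemma powstep (C : fieldType) (u Psi : {poly C}) ell :
  u ^+ ell.+1 * Psi^`(ell.+1) = u * (u ^+ ell * Psi^`(ell))^`() - u^`() * (u ^+ ell * Psi^`(ell)) *+ ell.
Proof.
rewrite derivM deriv_exp -derivnS.
case: ell => [|ell] /=; rewrite ?mulr0n ?exprS; ring.
Qed.

Lemma deriv_sum (C : fieldType) n (f : nat -> {poly C}) :
  (\sum_(i < n) f i)^`() = \sum_(i < n) (f i)^`().
Proof.
elim: n => [|n IH]; first by rewrite !big_ord0 deriv0.
by rewrite !big_ord_recr derivD IH.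
Qed.

Lemma second (C : fieldType) (a : C) (P : {poly {poly C}}) (l : nat -> {poly C}) (rL : nat)
  (G Phi : {poly C}) (g0 : C) (K ell : nat) :
  small K (ev a (dxq P) G + ev a P^`() G * G^`()) ->
  small K (\sum_(k < rL.+1) (l k \Po G) * (Phi^`(k) \Po (G - g0%:P))) ->
  small K (ev a (P^`() ^+ 2 * (l rL)^:P) G *
      (\sum_(j < rL) ev a (Ef P l rL ell j) G * (Phi^`(j) \Po (G - g0%:P)))^`()
    - (ev a (P^`() ^+ 2 * (l rL)^:P) G)^`() *
      (\sum_(j < rL) ev a (Ef P l rL ell j) G * (Phi^`(j) \Po (G - g0%:P))) *+ ell
    - \sum_(j < rL) ev a (Ef P l rL ell.+1 j) G * (Phi^`(j) \Po (G - g0%:P))).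
Proof.
move=> hP hL.
destruct rL as [|r].
  by rewrite !big_ord0 deriv0 !mulr0 mul0rn !subr0; apply: small0.
pose H := G - g0%:P.
pose e j := ev a (Ef P l r.+1 ell j) G.
pose dxe j := ev a (dxq (Ef P l r.+1 ell j)) G.
pose de j := ev a (Ef P l r.+1 ell j)^`() G.
pose lf j := l j \Po G.
pose F j := Phi^`(j) \Po H.
pose py := ev a P^`() G.
pose px := ev a (dxq P) G.
pose dlr := (l r.+1)^`() \Po G.
pose dpy := ev a P^`()^`() G.
pose dxpy := ev a (dxq P^`()) G.
pose g' := G^`().
have A := alg_id r ell e dxe de lf F py px dlr dpy dxpy g'.
have hu : ev a (P^`() ^+ 2 * (l r.+1)^:P) G = py ^+ 2 * lf r.+1.
  by rewrite evM expr2 evM ev_polyC expr2.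
have hdu : (py ^+ 2 * lf r.+1)^`() =
    (py * (dxpy + dpy * g') * lf r.+1) *+ 2 + py ^+ 2 * (dlr * g').
  rewrite derivM deriv_exp {1}/py ev_deriv /lf deriv_comp -/py -/dxpy -/dpy -/g' -/dlr /=.
  ring.
have hF : forall j, (F j)^`() = F j.+1 * g'.
  move=> j; rewrite /F deriv_comp -derivnS /H derivB derivC subr0 //.
have hY' : (\sum_(j < r.+1) e j * F j)^`() =
    \sum_(j < r.+1) ((dxe j + de j * g') * F j + e j * (F j.+1 * g')).
  rewrite (@deriv_sum _ r.+1 (fun j => e j * F j)); apply: eq_bigr => j _.
  by rewrite derivM hF /e ev_deriv.
have hE : forall j, ev a (Ef P l r.+1 ell.+1 j) G =
   py * lf r.+1 * (py * dxe j - px * de j)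
      - (j != 0%N)%:R * (py * px * lf r.+1 * e j.-1)
      + py * px * e r * lf j
      - ((lf r.+1 * (dxpy * py - dpy * px)) *+ 2 - py * px * dlr) *+ ell * e j.
  move=> j; rewrite [Ef _ _ _ ell.+1 j]/=.
  rewrite /Vq derivC_map.
  by rewrite !(evM, evB, evD, evMn, ev_nat, ev_polyC).
rewrite hu hdu -/H -/F hY'.
pose E' := fun j : nat => py * lf r.+1 * (py * dxe j - px * de j)
      - (j != 0%N)%:R * (py * px * lf r.+1 * e j.-1)
      + py * px * e r * lf j
      - ((lf r.+1 * (dxpy * py - dpy * px)) *+ 2 - py * px * dlr) *+ ell * e j.
rewrite (_ : \sum_(j < r.+1) ev a (Ef P l r.+1 ell.+1 j) G * (Phi^`(j) \Po H)
   = \sum_(j < r.+1) E' j * F j); last by apply: eq_bigr => j _; rewrite hE.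
move: A; cbv beta zeta => ->.
apply: smallB; first exact: small_mulr hP.
exact: small_mull hL.
Qed.

Lemma core (C : fieldType) (a : C) (P : {poly {poly C}}) (l : nat -> {poly C}) (rL : nat)
  (G Phi : {poly C}) (g0 : C) (K : nat) :
  (G - g0%:P)`_0 = 0 ->
  small K (ev a (dxq P) G + ev a P^`() G * G^`()) ->
  small K (\sum_(k < rL.+1) (l k \Po G) * (Phi^`(k) \Po (G - g0%:P))) ->
  (rL = 0%N -> Phi \Po (G - g0%:P) = 0) ->
  forall ell, small (K - ell)
     (ev a (P^`() ^+ 2 * (l rL)^:P) G ^+ ell * (Phi \Po (G - g0%:P))^`(ell)
        - \sum_(j < rL) ev a (Ef P l rL ell j) G * (Phi^`(j) \Po (G - g0%:P))).
Proof.
set H := G - g0%:P => H0 hP hL hr0.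
set u := ev a _ G.
set F := fun j => Phi^`(j) \Po H.
have hF : forall j, (F j)^`() = F j.+1 * G^`().
  move=> j; rewrite /F deriv_comp -derivnS /H derivB derivC subr0 //.
elim=> [|ell IH].
  rewrite expr0 mul1r derivn0.
  clear u; destruct rL as [|r].
    by rewrite big_ord0 hr0 // subr0; apply: small0.
  rewrite big_ord_recl /= big1 ?addr0.
    by rewrite ev_nat mul1r ?derivn0; apply: small_eq.
  by move=> j _; rewrite ev_nat mul0r.
pose X := u ^+ ell * (Phi \Po H)^`(ell).
pose Y := \sum_(j < rL) ev a (Ef P l rL ell j) G * F j.
have {}IH : small (K - ell) (X - Y) by exact: IH.
have -> : forall Z, u ^+ ell.+1 * (Phi \Po H)^`(ell.+1) - Z =
    (u * (X - Y)^`() - u^`() * (X - Y) *+ ell) + (u * Y^`() - u^`() * Y *+ ell - Z).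
  by move=> Z; rewrite powstep -/X derivB; ring.
apply: smallD.
  apply: smallB; last by apply: small_muln; apply: small_mull; apply: small_le IH; lia.
  apply: small_mull; apply: small_le (small_deriv IH); lia.
apply: (small_le (K := K)); first lia.
exact: second.
Qed.

Lemma f_zero (C : fieldType) (q : {poly C}) (f : fps C) :
  q != 0 -> (forall n, fps_mul (fun i => q`_i) f n = 0) -> forall i, f i = 0.
Proof.
move=> qn0 hf.
have ex : exists i, q`_i != 0.
  by exists (size q).-1; rewrite -lead_coefE lead_coef_eq0.
case: (ex_minnP ex) => v hv hmin.
have lowz : forall i, (i < v)%N -> q`_i = 0.
  move=> i hi; apply/eqP; apply: contraTT hi => h; rewrite -leqNgt; exact: hmin.
elim/ltn_ind => m IH.
have := hf (m + v)%N; rewrite /fps_mul.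
have hvo : (v < (m + v).+1)%N by lia.
rewrite (bigD1 (Ordinal hvo)) //= big1 ?addr0.
  have -> : (m + v - v = m)%N by lia.
  by move/eqP; rewrite mulf_eq0 (negbTE hv) /= => /eqP.
move=> i hi; case: (ltnP i v) => hiv; first by rewrite lowz // mul0r.
have hne : nat_of_ord i != v by apply: contra hi => /eqP h; apply/eqP/val_inj.
rewrite IH ?mulr0 //; have := ltn_ord i; move: hne hiv => /eqP; lia.
Qed.

Lemma comp_sum (C : fieldType) n (f : nat -> {poly C}) (H : {poly C}) :
  (\sum_(i < n) f i) \Po H = \sum_(i < n) (f i \Po H).
Proof.
elim: n => [|n IH]; first by rewrite !big_ord0 comp_poly0.
by rewrite !big_ord_recr comp_polyD IH.
Qed.

Lemma ident (C : fieldType) (rL : nat) (l : nat -> {poly C}) (hord : l rL != 0)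
  (P : {poly {poly C}}) (a : C) (g f : fps C)
  (hg : solves_P P a g) (hf : solves_L rL l (g 0%N) f) (ell n : nat) :
  fps_mul (fps_pow (bivar_eval ((P^`()) ^+ 2 * map_poly polyC (l rL)) a g) ell)
     (iter ell (@fps_deriv C) (fps_comp f g)) n
  = \sum_(j < rL) fps_mul (bivar_eval (Ef P l rL ell j) a g)
        (fps_comp (iter j (@fps_deriv C) f) g) n.
Proof.
pose M := (n + ell + rL + 2)%N.
pose G := T g M. pose Phi := T f M. pose H := G - (g 0%N)%:P.
have rg : rep M g G := @rep_T C M g.
have rf : rep M f Phi := @rep_T C M f.
have H0 : H`_0 = 0 by rewrite /H coefB coefC /= /G coef_poly /M addn2 /= subrr.
have hP : small (M - rL - 1) (ev a (dxq P) G + ev a P^`() G * G^`()).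
  rewrite -ev_deriv; apply: (small_le (K := M.-1)); first lia.
  apply: small_deriv => i hi.
  by rewrite -(rep_bivar P a rg) //; apply: hg.
have hL : small (M - rL - 1) (\sum_(k < rL.+1) (l k \Po G) * (Phi^`(k) \Po H)).
  apply: (small_le (K := M - rL)); first lia.
  have s1 : small (M - rL) (\sum_(k < rL.+1) (l k \Po ('X + (g 0%N)%:P)) * Phi^`(k)).
    move=> i hi; rewrite coef_sum -[RHS](hf i); apply: eq_bigr => k _.
    have rk : rep (M - rL) (iter k (@fps_deriv C) f) Phi^`(k).
      apply: rep_le (rep_iter (j:=k) rf); have := ltn_ord k; lia.
    have rl : rep (M - rL) (poly_at (l k) (g 0%N)) (l k \Po ('X + (g 0%N)%:P)) by move=> m _.
    by rewrite (rep_mul rl rk).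
  have := small_comp s1 H0; rewrite (@comp_sum _ rL.+1 (fun k => (l k \Po ('X + (g 0%N)%:P)) * Phi^`(k))).
  congr small; apply: eq_bigr => k _.
  rewrite comp_polyM -comp_polyA comp_polyD comp_polyX comp_polyC /H subrK //.
have hr0 : rL = 0%N -> Phi \Po H = 0.
  move=> r0; have fz : forall i, f i = 0.
    apply: (f_zero (q := l 0%N \Po ('X + (g 0%N)%:P))).
      by rewrite comp_poly2_eq0 ?size_XaddC // -r0.
    move=> m; have := hf m; rewrite r0 big_ord1 /=; exact.
  have -> : Phi = 0 by apply/polyP => i; rewrite coef_poly coef0 fz; case: ifP.
  by rewrite comp_poly0.
have hc := @core C a P l rL G Phi (g 0%N) (M - rL - 1) H0 hP hL hr0 ell.
have hn : (n < M - rL - 1 - ell)%N by lia.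
have := hc n hn; rewrite coefB => /eqP; rewrite subr_eq0 => /eqP eq1.
have r1 : rep (M - ell) (fps_pow (bivar_eval ((P^`()) ^+ 2 * map_poly polyC (l rL)) a g) ell)
    (ev a (P^`() ^+ 2 * (l rL)^:P) G ^+ ell).
  by apply: rep_le (rep_pow ell (rep_bivar _ a rg)); lia.
have r2 : rep (M - ell) (iter ell (@fps_deriv C) (fps_comp f g)) ((Phi \Po H)^`(ell)).
  exact: rep_iter (rep_comp rf rg).
rewrite (rep_mul r1 r2); last lia.
rewrite eq1 coef_sum; apply: eq_bigr => j _.
have r3 : rep (M - j) (bivar_eval (Ef P l rL ell j) a g) (ev a (Ef P l rL ell j) G).
  by apply: rep_le (rep_bivar _ a rg); lia.
have r4 : rep (M - j) (fps_comp (iter j (@fps_deriv C) f) g) (Phi^`(j) \Po H).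
  apply: rep_comp; first exact: rep_iter.
  by apply: rep_le rg; lia.
rewrite (rep_mul r3 r4) //; have := ltn_ord j; lia.
Qed.

Definition bnd (C : fieldType) (A B : nat) (Q : {poly {poly C}}) :=
  (forall i, (size (nth 0%R Q i) <= A)%N) /\ (size Q <= B)%N.

Lemma bnd_mono (C : fieldType) A B A' B' (Q : {poly {poly C}}) :
  (A <= A')%N -> (B <= B')%N -> bnd A B Q -> bnd A' B' Q.
Proof. move=> h1 h2 [c s]; split; [move=> i; exact: leq_trans (c i) h1 | exact: leq_trans s h2]. Qed.

Lemma bndD (C : fieldType) A B A' B' (p q : {poly {poly C}}) :
  bnd A B p -> bnd A' B' q -> bnd (maxn A A') (maxn B B') (p + q).
Proof.
move=> [c1 s1] [c2 s2]; split.
  move=> i; rewrite coefD; apply: leq_trans (size_polyD _ _) _.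
  by rewrite geq_max !leq_max c1 c2 orbT.
apply: leq_trans (size_polyD _ _) _; by rewrite geq_max !leq_max s1 s2 orbT.
Qed.

Lemma bndN (C : fieldType) A B (p : {poly {poly C}}) : bnd A B p -> bnd A B (- p).
Proof. by move=> [c s]; split; [move=> i; rewrite coefN size_polyN | rewrite size_polyN]. Qed.

Lemma bndB (C : fieldType) A B A' B' (p q : {poly {poly C}}) :
  bnd A B p -> bnd A' B' q -> bnd (maxn A A') (maxn B B') (p - q).
Proof. by move=> h1 h2; apply: bndD h1 (bndN h2). Qed.

Lemma bnd0 (C : fieldType) A B : bnd A B (0 : {poly {poly C}}).
Proof. by split; [move=> i; rewrite coef0 size_poly0 | rewrite size_poly0]. Qed.

Lemma bndMn (C : fieldType) A B (p : {poly {poly C}}) n : bnd A B p -> bnd A B (p *+ n).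
Proof.
move=> h; elim: n => [|n IH]; first exact: bnd0.
rewrite mulrS; apply: bnd_mono (bndD h IH); by rewrite geq_max leqnn.
Qed.

Lemma size_sum_le (C : fieldType) n (F : nat -> {poly C}) N :
  (forall i, (i < n)%N -> (size (F i) <= N)%N) -> (size (\sum_(i < n) F i)%R <= N)%N.
Proof.
elim: n => [|n IH] h; first by rewrite big_ord0 size_poly0.
rewrite big_ord_recr; apply: leq_trans (size_polyD _ _) _.
by rewrite geq_max IH ?h // => i hi; apply: h; lia.
Qed.

Lemma bndM (C : fieldType) A B A' B' (p q : {poly {poly C}}) :
  bnd A B p -> bnd A' B' q -> bnd (A + A').-1 (B + B').-1 (p * q).
Proof.
move=> [c1 s1] [c2 s2]; split.
  move=> i; rewrite coefM.
  apply: (size_sum_le (F := fun j => p`_j * q`_(i - j))) => j _.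
  apply: leq_trans (size_polyMleq _ _) _.
  have := c1 j; have := c2 (i - j)%N; lia.
apply: leq_trans (size_polyMleq _ _) _; lia.
Qed.

Lemma size_deriv_le (C : nzRingType) (p : {poly C}) : (size p^`() <= (size p).-1)%N.
Proof.
have [->|pn0] := eqVneq p 0; first by rewrite deriv0 size_poly0.
have := lt_size_deriv pn0; lia.
Qed.

Lemma bnd_dx (C : fieldType) A B (p : {poly {poly C}}) : bnd A B p -> bnd A.-1 B (dxq p).
Proof.
move=> [c s]; split; last exact: leq_trans (size_map_le _ _) s.
move=> i; rewrite coef_map /=; apply: leq_trans (size_deriv_le _) _; rewrite -!subn1; exact: leq_sub2r (c i).
Qed.

Lemma size_muln_le (C : fieldType) (p : {poly C}) n : (size (p *+ n) <= size p)%N.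
Proof. by rewrite -scaler_nat; apply: size_scale_leq. Qed.

Lemma bnd_dy (C : fieldType) A B (p : {poly {poly C}}) : bnd A B p -> bnd A B.-1 p^`().
Proof.
move=> [c s]; split; last by apply: leq_trans (size_deriv_le _) _; rewrite -!subn1 leq_sub2r.
move=> i; rewrite coef_deriv; apply: leq_trans (size_muln_le _ _) _; exact: c.
Qed.

Lemma bnd_polyC (C : fieldType) (p : {poly C}) : bnd 1 (size p) p^:P.
Proof.
split; last by rewrite size_map_polyC.
by move=> i; rewrite coef_map /= size_polyC_leq1.
Qed.

Lemma bnd_nat (C : fieldType) n : bnd 1 1 (n%:R : {poly {poly C}}).
Proof.
rewrite -polyC_natr; split; last exact: size_polyC_leq1.
by move=> i; rewrite coefC; case: eqP => _; rewrite ?size_poly0 // -polyC_natr size_polyC_leq1.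
Qed.

Lemma bndP (C : fieldType) (P : {poly {poly C}}) : bnd (degx P).+1 (size P) P.
Proof.
split=> // i; case: (ltnP i (size P)) => hi.
  have := @leq_bigmax _ (fun j : 'I_(size P) => (size (nth 0%R P j)).-1) (Ordinal hi).
  rewrite /degx /=; lia.
by rewrite nth_default // size_poly0.
Qed.

Lemma bndD_same (C : fieldType) A B (p q : {poly {poly C}}) :
  bnd A B p -> bnd A B q -> bnd A B (p + q).
Proof. by move=> h1 h2; have := bndD h1 h2; rewrite !maxnn. Qed.
Lemma bndB_same (C : fieldType) A B (p q : {poly {poly C}}) :
  bnd A B p -> bnd A B q -> bnd A B (p - q).
Proof. by move=> h1 h2; have := bndB h1 h2; rewrite !maxnn. Qed.

Lemma Ef_bnd (C : fieldType) (P : {poly {poly C}}) (l : nat -> {poly C}) (rL dL rP dP : nat)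
  (hdegL : forall k, (k <= rL)%N -> (size (l k) <= dL.+1)%N)
  (hdegy : size P = rP.+1) (hdegx : degx P = dP) :
  forall ell j, (j < rL)%N ->
    bnd (ell * (2 * dP).-1 + 1) (ell * (2 * rP + dL).-1 + 1) (Ef P l rL ell j).
Proof.
have hP : bnd dP.+1 rP.+1 P by rewrite -hdegx -hdegy; apply: bndP.
have hPy := bnd_dy hP.
have hPx := bnd_dx hP.
have hdxPy := bnd_dx hPy.
have hPyy := bnd_dy hPy.
have hLk : forall k, (k <= rL)%N -> bnd 1 dL.+1 (l k)^:P.
  by move=> k hk; apply: bnd_mono (bnd_polyC (l k)) => //; apply: hdegL.
have hLr := hLk rL (leqnn _).
have hLr' := bnd_dy hLr.
have hV := bndB (bndMn 2 (bndM hLr (bndB (bndM hdxPy hPy) (bndM hPyy hPx))))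
                (bndM (bndM hPy hPx) hLr').
elim=> [|ell IH] j hj.
  by apply: bnd_mono (bnd_nat _ _); lia.
have hE := IH j hj.
have hE1 := IH j.-1 (leq_ltn_trans (leq_pred j) hj).
have hEr : bnd (ell * (2 * dP).-1 + 1) (ell * (2 * rP + dL).-1 + 1) (Ef P l rL ell rL.-1).
  by apply: IH; lia.
have hLj := hLk j (ltnW hj).
pose A' := ((ell.+1) * (2 * dP).-1 + 1)%N.
pose B' := ((ell.+1) * (2 * rP + dL).-1 + 1)%N.
have nl : forall (p : {poly {poly C}}) a b, bnd a b p ->
    (a <= A')%N -> (b <= B')%N -> bnd A' B' p.
  by move=> p a b h h1 h2; apply: bnd_mono h.
rewrite [Ef _ _ _ ell.+1 j]/=.
have t1 : bnd A' B' (P^`() * (l rL)^:P * (P^`() * dxq (Ef P l rL ell j) - dxq P * (Ef P l rL ell j)^`())).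
  have u1 := bndM hPy (bnd_dx hE).
  have u2 := bndM hPx (bnd_dy hE).
  have u : bnd (dP + ell * (2 * dP).-1)%N (rP + ell * (2 * rP + dL).-1)%N
     (P^`() * dxq (Ef P l rL ell j) - dxq P * (Ef P l rL ell j)^`()).
    apply: bndB_same; [apply: bnd_mono u1|apply: bnd_mono u2];
    generalize (ell * (2 * dP).-1)%N (ell * (2 * rP + dL).-1)%N => X Y; lia.
  apply: nl (bndM (bndM hPy hLr) u) _ _; rewrite /A' /B' !(mulSn ell);
    generalize (ell * (2 * dP).-1)%N (ell * (2 * rP + dL).-1)%N => X Y; lia.
have t2 : bnd A' B' ((j != 0%N)%:R * (P^`() * dxq P * (l rL)^:P * Ef P l rL ell j.-1)).
  apply: nl (bndM (bnd_nat C (j != 0%N)) (bndM (bndM (bndM hPy hPx) hLr) hE1)) _ _;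
    rewrite /A' /B' !(mulSn ell);
    generalize (ell * (2 * dP).-1)%N (ell * (2 * rP + dL).-1)%N => X Y; lia.
have t3 : bnd A' B' (P^`() * dxq P * Ef P l rL ell rL.-1 * (l j)^:P).
  apply: nl (bndM (bndM (bndM hPy hPx) hEr) hLj) _ _;
    rewrite /A' /B' !(mulSn ell);
    generalize (ell * (2 * dP).-1)%N (ell * (2 * rP + dL).-1)%N => X Y; lia.
have hV' : bnd (2 * dP) (2 * rP + dL) (Vq P l rL).
  rewrite /Vq; apply: bndB_same; last by apply: bnd_mono (bndM (bndM hPy hPx) hLr'); lia.
  have v1 : bnd (2 * dP) (2 * rP).-1 (dxq P^`() * P^`()).
    by apply: bnd_mono (bndM hdxPy hPy); lia.
  have v2 : bnd (2 * dP) (2 * rP).-1 (P^`()^`() * dxq P).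
    by apply: bnd_mono (bndM hPyy hPx); lia.
  by apply: bndMn; apply: bnd_mono (bndM hLr (bndB_same v1 v2)); lia.
have t4 : bnd A' B' (Vq P l rL *+ ell * Ef P l rL ell j).
  apply: nl (bndM (bndMn ell hV') hE) _ _;
    rewrite /A' /B' !(mulSn ell);
    generalize (ell * (2 * dP).-1)%N (ell * (2 * rP + dL).-1)%N => X Y; lia.
exact: bndB_same (bndD_same (bndB_same t1 t2) t3) t4.
Qed.

Unset Implicit Arguments. Set Strict Implicit.

Theorem lemma4 (C : fieldType) (char0 : [pchar C] =i pred0)
  (rL dL : nat) (l : nat -> {poly C})
  (hord : l rL != 0) (hdegL : forall k, (k <= rL)%N -> (size (l k) <= dL.+1)%N)
  (P : {poly {poly C}}) (rP dP : nat)
  (hdegy : size P = rP.+1) (hdegx : degx P = dP)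
  (hsqf : squarefree (toCxy P)) (hdiv : no_nonconst_y_divisor P)
  (a : C) (g : fps C) (f : fps C)
  (hg : solves_P P a g) (hf : solves_L rL l (g 0%N) f) :
  let U : {poly {poly C}} := (P^`()) ^+ 2 * map_poly polyC (l rL) in
  forall ell : nat,
  exists E : nat -> {poly {poly C}},
    (forall j, (j < rL)%N ->
       (forall i : nat, (size (nth 0%R (E j) i) <= ell * (2 * dP).-1 + 1)%N) /\
       (size (E j) <= ell * (2 * rP + dL).-1 + 1)%N) /\
    forall n,
      fps_mul (fps_pow (bivar_eval U a g) ell) (iter ell (@fps_deriv C) (fps_comp f g)) n
      = \sum_(j < rL) fps_mul (bivar_eval (E j) a g) (fps_comp (iter j (@fps_deriv C) f) g) n.
Proof.
move=> U ell; exists (Ef P l rL ell); split.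
  move=> j hj; exact: (Ef_bnd hdegL hdegy hdegx ell hj).
move=> n; exact: (ident hord hg hf ell n).
Qed.
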